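(* Let $\lambda$ be a normalized additively alternating $n\times n$ complex matrix of rank $n-1$, and let $I\subseteq\{0,\dots,n-1\}$ be the vertex set of a cycle of smoothable edges in the smoothing diagram of $\lambda$. Then: (1) every smoothable edge with both endpoints in $I$ (resp. both outside $I$) has all its colored angles with vertex in $I$ (resp. outside $I$); (2) the submatrix $(\lambda_{ij})_{i,j\in I}$ is normalized of corank one, and its smoothing diagram consists of the given cycle on $I$, with the same colorings of edges and angles; (3) $\lambda_{i_1j}=\lambda_{i_2j}$ for all $i_1,i_2\in I$ and $j\notin I$.
   Context: Additively alternating: $\lambda_{ji}=-\lambda_{ij}$; normalized: rows sum to $0$. The biresidue matrix of a normalized $\lambda$ of rank $m-1$ (size $m$) is the unique normalized alternating $b$ with $b|_\Delta=(\lambda|_\Delta)^{-1}$, $\Delta=\{z\in\mathbb{C}^m:\sum z_i=0\}$. Smoothing diagram of $\lambda$: the complete graph on the index set, where an edge $\{i,j\}$ is colored (smoothable) if $b_{ij}\ne0$ and $\theta_k:=(b_{jk}+b_{ki})/b_{ij}\in\mathbb{Z}_{\ge0}$ for all $k\ne i,j$, and for such an edge the angle $i-k-j$ is colored (darkly if $\theta_k=2$, lightly if $\theta_k=1$) whenever $\theta_k\ne0$. A cycle of smoothable edges is a sequence of $m\ge3$ distinct vertices $i_1,\dots,i_m$ with $\{i_1,i_2\},\dots,\{i_{m-1},i_m\},\{i_m,i_1\}$ all smoothable. *)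

(* Defs.v *)
(* Scalars: an arbitrary numClosedFieldType C (the complex
   numbers are an instance; the statement is purely algebraic). *)
From HB Require Import structures.
From mathcomp Require Import all_boot all_order all_algebra.
Set Implicit Arguments. Unset Strict Implicit. Unset Printing Implicit Defensive.
Import Order.TTheory GRing.Theory Num.Theory.
Local Open Scope ring_scope.

Section Defs.
Variable C : numClosedFieldType.

Definition alternating n (lam : 'M[C]_n) : Prop :=
  forall i j : 'I_n, lam j i = - lam i j.

Definition normalized n (lam : 'M[C]_n) : Prop :=
  forall i : 'I_n, \sum_(j < n) lam i j = 0.

Definition in_Delta n (z : 'cV[C]_n) : Prop := \sum_(i < n) z i 0 = 0.

Definition is_biresidue n (lam b : 'M[C]_n) : Prop :=
  [/\ alternating b, normalized b &
      forall z : 'cV[C]_n, in_Delta z -> b *m (lam *m z) = z].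

Definition theta n (b : 'M[C]_n) (i j k : 'I_n) : C :=
  (b j k + b k i) / b i j.

Definition smoothable n (b : 'M[C]_n) (i j : 'I_n) : Prop :=
  [/\ i != j, b i j != 0 &
      forall k : 'I_n, k != i -> k != j -> exists m : nat, theta b i j k = m%:R].

Definition angle_colored n (b : 'M[C]_n) (i j k : 'I_n) : Prop :=
  [/\ smoothable b i j, k != i, k != j & theta b i j k != 0].
Definition angle_dark n (b : 'M[C]_n) (i j k : 'I_n) : Prop :=
  [/\ smoothable b i j, k != i, k != j & theta b i j k = 2%:R].
Definition angle_light n (b : 'M[C]_n) (i j k : 'I_n) : Prop :=
  [/\ smoothable b i j, k != i, k != j & theta b i j k = 1].

Definition smoothable_cycle n (b : 'M[C]_n) m (c : 'I_m -> 'I_n) : Prop :=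
  [/\ (3 <= m)%N, injective c & forall t : 'I_m, smoothable b (c t) (c (ordS t))].

Definition cycle_edge n m (c : 'I_m -> 'I_n) (u v : 'I_n) : Prop :=
  exists t : 'I_m, (u = c t /\ v = c (ordS t)) \/ (v = c t /\ u = c (ordS t)).

Definition submx_on n (lam : 'M[C]_n) (I : {set 'I_n}) : 'M[C]_#|I| :=
  \matrix_(i < #|I|, j < #|I|) lam (enum_val i) (enum_val j).

End Defs.

(* Main.v *)
Require Import Defs.
From HB Require Import structures.
From mathcomp Require Import all_boot all_order all_algebra.
From mathcomp Require Import zify ring.
Set Implicit Arguments. Unset Strict Implicit. Unset Printing Implicit Defensive.
Import Order.TTheory GRing.Theory Num.Theory.
Local Open Scope ring_scope.

Section Basics.
Variable C : numClosedFieldType.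
Variable n : nat.
Implicit Types b lam : 'M[C]_n.

Lemma alt_diag b : alternating b -> forall i, b i i = 0.
Proof.
move=> H i; have /eqP := H i i; rewrite -subr_eq0 opprK -mulr2n mulrn_eq0 /=.
by move/eqP.
Qed.

Lemma colsum b : alternating b -> normalized b -> forall i, \sum_k b k i = 0.
Proof.
move=> Ha Hn i; rewrite (eq_bigr (fun k => - b i k)) => [|k _]; last exact: Ha.
by rewrite sumrN Hn oppr0.
Qed.

Lemma theta_mul b i j k : alternating b -> b i j != 0 ->
  theta b i j k * b i j = b k i - b k j.
Proof.
by move=> Ha nz; rewrite /theta divfK // (Ha k j) addrC.
Qed.

Lemma theta_sym b i j k : alternating b -> theta b j i k = theta b i j k.
Proof.
move=> Ha; rewrite /theta (Ha i j) (Ha k i) (Ha j k) invrN mulrN -mulNr.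
by congr (_ * _); rewrite opprD !opprK addrC.
Qed.

Lemma smooth_sym b i j : alternating b -> smoothable b i j -> smoothable b j i.
Proof.
move=> Ha [nij nz Hk]; split.
- by rewrite eq_sym.
- by rewrite (Ha i j) oppr_eq0.
- by move=> k k1 k2; rewrite theta_sym //; apply: Hk.
Qed.

Lemma ordS_val k (t : 'I_k) : nat_of_ord (ordS t) = if t.+1 == k then 0%N else t.+1.
Proof.
rewrite /= ; case: eqP => [->|ne]; first by rewrite modnn.
by rewrite modn_small // ltn_neqAle ltn_ord andbT; apply/eqP.
Qed.

Lemma ordS_ind k (P : 'I_k -> Prop) (t0 : 'I_k) : val t0 = 0%N -> P t0 ->
  (forall t, P t -> P (ordS t)) -> forall t, P t.
Proof.
move=> h0 P0 PS [t ht]; elim: t ht => [|t IH] ht.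
  by have -> : Ordinal ht = t0 by apply: ord_inj.
have ht' : (t < k)%N by apply: ltnW.
have -> : Ordinal ht = ordS (Ordinal ht').
  apply: ord_inj; rewrite ordS_val /=.
  by rewrite (ltn_eqF ht).
exact/PS/IH.
Qed.

Lemma ordS_neq k (t : 'I_k) : (3 <= k)%N -> ordS t != t /\ ordS (ordS t) != t.
Proof.
move=> k3; split; apply/eqP => /(congr1 (@nat_of_ord _)); rewrite ?ordS_val;
 case: t => t ht /=; have [e|ne] := eqVneq t.+1 k; rewrite ?e ?eqxx ?(negbTE ne) /=;
 repeat (case: ifP => /eqP ?); lia.
Qed.

Lemma cycle_const b k (d : 'I_k -> 'I_n) : alternating b -> smoothable_cycle b d ->
  forall z, z \notin [set d t | t : 'I_k] -> forall t t', b z (d t) = b z (d t').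
Proof.
move=> Ha [k3 dinj Hs] z zI.
have k0 : (0 < k)%N by lia.
pose t0 := Ordinal k0.
pose beta t := b (d t) (d (ordS t)).
have bnz t : beta t != 0 by case: (Hs t).
have step t : exists q : C, 0 < q /\ beta (ordS t) = beta t * q.
  have [n1 n2] := ordS_neq t k3.
  have n3 : ordS (ordS t) != ordS t.
    by rewrite (inj_eq (@ordS_inj k)).
  have wu : d (ordS (ordS t)) != d t by rewrite (inj_eq dinj).
  have wv : d (ordS (ordS t)) != d (ordS t) by rewrite (inj_eq dinj).
  have uv : d t != d (ordS t) by rewrite (inj_eq dinj) eq_sym.
  have [_ _ /(_ _ wu wv) [m1 e1]] := Hs t.
  have [_ _ /(_ (d t) uv) ] := Hs (ordS t).
  rewrite eq_sym => /(_ wu) [m2 e2].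
  have h1 := theta_mul (d (ordS (ordS t))) Ha (bnz t).
  have h2 := theta_mul (d t) Ha (bnz (ordS t)).
  rewrite e1 in h1; rewrite e2 in h2.
  exists ((m1.+1)%:R / (m2.+1)%:R); split; first by rewrite divr_gt0 // ltr0Sn.
  apply: (mulIf (_ : (m2.+1)%:R != 0)); first by rewrite pnatr_eq0.
  rewrite mulrA divfK ?pnatr_eq0 //.
  rewrite /beta in h1 h2 *.
  rewrite (Ha (d (ordS (ordS t))) (d t)) in h2.
  rewrite (Ha (d (ordS t)) (d (ordS (ordS t)))) in h1.
  rewrite [m2.+1%:R]mulrS [m1.+1%:R]mulrS !mulrDr !mulr1 [_ * m2%:R]mulrC h2 [_ * m1%:R]mulrC h1.
  ring.
have pos t : 0 < beta t / beta t0.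
  apply: (@ordS_ind k (fun t => 0 < beta t / beta t0) t0) => //.
    by rewrite divff.
  move=> s hs; have [q [q0 ->]] := step s.
  by rewrite mulrAC mulr_gt0.
have zt t : z != d t.
  by apply: contraNneq zI => ->; apply: imset_f.
have tel : \sum_t (b z (d t) - b z (d (ordS t))) = 0.
  by rewrite sumrB (reindex_inj (@ordS_inj k)) subrr.
have term t : b z (d t) - b z (d (ordS t)) = theta b (d t) (d (ordS t)) z * beta t.
  by rewrite (theta_mul _ Ha (bnz t)).
have tnat t : exists m : nat, theta b (d t) (d (ordS t)) z = m%:R.
  by case: (Hs t) => _ _; apply; apply: zt.
have S0 : \sum_t theta b (d t) (d (ordS t)) z * (beta t / beta t0) = 0.
  rewrite (eq_bigr (fun t => (b z (d t) - b z (d (ordS t))) / beta t0)) => [|t _].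
    by rewrite -mulr_suml tel mul0r.
  by rewrite term mulrA.
have ge0 : forall s : 'I_k, true -> 0 <= theta b (d s) (d (ordS s)) z * (beta s / beta t0).
  by move=> s _; have [m' ->] := tnat s; rewrite mulr_ge0 // ltW.
have E t : b z (d t) = b z (d (ordS t)).
  apply/eqP; rewrite -subr_eq0 term mulf_eq0 (negbTE (bnz t)) orbF.
  have := psumr_eq0P ge0 S0 (i := t) isT.
  by move/eqP; rewrite mulf_eq0 (gt_eqF (pos t)) orbF.
have Ec t : b z (d t) = b z (d t0).
  apply: (@ordS_ind k (fun t => b z (d t) = b z (d t0)) t0) => //.
  by move=> s hs; rewrite -E.
by move=> t t'; rewrite !Ec.
Qed.

End Basics.
Section Mat.
Variable C : numClosedFieldType.
Variable n : nat.
Implicit Types b lam : 'M[C]_n.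

Lemma inv_stable (S M N : 'M[C]_n) :
  M *m N = 1%:M -> (S *m M <= S)%MS -> (S *m N <= S)%MS.
Proof.
move=> MN sSM.
have uM : M \in unitmx by case/mulmx1_unit: MN.
have rk : \rank (S *m M) = \rank S by rewrite mxrankMfree // row_free_unit.
have := mxrank_leqif_sup sSM; rewrite rk => /leqif_refl sS.
apply: submx_trans (submxMr N sS) _.
by rewrite -mulmxA MN mulmx1 submx_refl.
Qed.

Definition JJ : 'M[C]_n := const_mx 1.

Lemma expandJ (A B : 'M[C]_n) c : (forall i, \sum_k A i k = 0) ->
  (forall j, \sum_k B k j = 0) -> forall x y,
  ((A + c *: JJ) *m (B + c *: JJ)) x y = (A *m B) x y + c * c *+ n.
Proof.
move=> hA hB x y; rewrite [LHS]mxE.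
rewrite (eq_bigr (fun k => A x k * B k y + (A x k * c + (c * B k y + c * c)))) => [|k _]; last first.
  by rewrite !mxE mulr1; ring.
rewrite !big_split /= -!mulr_suml -mulr_sumr hA hB sumr_const card_ord.
by rewrite mul0r mulr0 !add0r -mulrnAl [in RHS]mxE.
Qed.

Lemma bl_P lam b : normalized lam -> is_biresidue lam b -> (0 < n)%N ->
  forall x y, (b *m lam) x y = (x == y)%:R - n%:R^-1.
Proof.
move=> Hn [_ _ Hb] n0 x y.
have nz : (n%:R : C) != 0 by rewrite pnatr_eq0 -lt0n.
pose z : 'cV[C]_n := \col_i ((i == y)%:R - n%:R^-1).
have zD : in_Delta z.
  rewrite /in_Delta (eq_bigr (fun i => (i == y)%:R - n%:R^-1)) => [|i _]; last by rewrite mxE.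
  rewrite sumrB sumr_const card_ord -[_^-1 *+ n]mulr_natr mulVf //.
  rewrite (bigD1 y) //= eqxx big1 ?addr0 ?subrr // => i /negbTE ->; done.
have lz : forall k, (lam *m z) k 0 = lam k y.
  move=> k; rewrite mxE (eq_bigr (fun i => lam k i * (i == y)%:R - lam k i * n%:R^-1)) => [|i _]; last by rewrite mxE mulrBr.
  rewrite sumrB -mulr_suml Hn mul0r subr0 (bigD1 y) //= eqxx mulr1 big1 ?addr0 // => i /negbTE ->.
  by rewrite mulr0.
have := congr1 (fun v : 'cV[C]_n => v x 0) (Hb z zD); rewrite mxE /=.
rewrite (eq_bigr (fun k => b x k * lam k y)) => [|k _]; last by rewrite lz.
by move=> h; rewrite [LHS]mxE h mxE.
Qed.

End Mat.
Arguments JJ {C n}.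
Section Mat2.
Variable C : numClosedFieldType.
Variable n : nat.
Implicit Types b lam : 'M[C]_n.

Lemma ccn (c : C) : (n%:R : C) != 0 -> c = n%:R^-1 -> c * c *+ n = c.
Proof. by move=> nz ->; rewrite -mulrnAr -[n%:R^-1 *+ n]mulr_natr mulVf // mulr1. Qed.

Lemma MN_one lam b : alternating lam -> normalized lam -> is_biresidue lam b -> (0 < n)%N ->
  (b + n%:R^-1 *: JJ) *m (lam + n%:R^-1 *: JJ) = 1%:M.
Proof.
move=> Ha Hn Hb n0; have nz : (n%:R : C) != 0 by rewrite pnatr_eq0 -lt0n.
have [Hba Hbn _] := Hb.
apply/matrixP => x y; rewrite expandJ //; last exact: colsum.
by rewrite (bl_P Hn Hb n0) ccn // subrK !mxE.
Qed.

Lemma lb_P lam b : alternating lam -> normalized lam -> is_biresidue lam b -> (0 < n)%N ->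
  forall x y, (lam *m b) x y = (x == y)%:R - n%:R^-1.
Proof.
move=> Ha Hn Hb n0 x y; have nz : (n%:R : C) != 0 by rewrite pnatr_eq0 -lt0n.
have [Hba Hbn _] := Hb.
have := congr1 (fun M : 'M[C]_n => M x y) (mulmx1C (MN_one Ha Hn Hb n0)).
rewrite /= expandJ //; last exact: colsum.
by rewrite ccn // !mxE => <-; rewrite addrK.
Qed.

Variable I : {set 'I_n}.
Definition KK : 'M[C]_n := \matrix_(i, j) (if j \in I then 1 else (i == j)%:R).

Lemma rK_entry (r : 'rV[C]_n) j :
  (r *m KK) 0 j = if j \in I then \sum_i r 0 i else r 0 j.
Proof.
rewrite mxE; case: ifP => jI.
  by apply: eq_bigr => i _; rewrite mxE jI mulr1.
rewrite (bigD1 j) //= mxE jI eqxx mulr1 big1 ?addr0 // => i /negbTE ij.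
by rewrite mxE jI ij mulr0.
Qed.

Lemma rK0 (r : 'rV[C]_n) x0 : x0 \in I ->
  r *m KK = 0 <-> (forall j, j \notin I -> r 0 j = 0) /\ \sum_i r 0 i = 0.
Proof.
move=> x0I; split.
  move=> h; split.
    by move=> j jI; have := congr1 (fun v : 'rV[C]_n => v 0 j) h; rewrite rK_entry (negbTE jI) mxE.
  by have := congr1 (fun v : 'rV[C]_n => v 0 x0) h; rewrite rK_entry x0I mxE.
move=> [h1 h2]; apply/rowP => j; rewrite rK_entry mxE; case: ifP => // /negbT; exact: h1.
Qed.

Lemma stabM b (c : C) x0 : x0 \in I -> alternating b -> normalized b ->
  (forall z, z \notin I -> forall u v, u \in I -> v \in I -> b z u = b z v) ->
  forall r : 'rV[C]_n, r *m KK = 0 -> r *m (b + c *: JJ) *m KK = 0.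
Proof.
move=> x0I Ha Hn Hc r /(rK0 r x0I) [h1 h2]; apply/(rK0 _ x0I); split.
  move=> j jI; rewrite mxE.
  rewrite (eq_bigr (fun k => r 0 k * (- b j x0 + c))) => [|k _]; last first.
    rewrite !mxE mulr1; case: (boolP (k \in I)) => kI; last by rewrite h1 // !mul0r.
    by rewrite (Ha j k) (Hc j jI k x0 kI x0I).
  by rewrite -mulr_suml h2 mul0r.
rewrite (eq_bigr (fun j => \sum_k r 0 k * (b k j + c))) => [|j _]; last first.
  by rewrite mxE; apply: eq_bigr => k _; rewrite !mxE mulr1.
rewrite exchange_big /= (eq_bigr (fun k => r 0 k * (c *+ n))) => [|k _]; last first.
  by rewrite -mulr_sumr big_split /= Hn add0r sumr_const card_ord.
by rewrite -mulr_suml h2 mul0r.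
Qed.

Lemma stabS (M : 'M[C]_n) : (forall r : 'rV[C]_n, r *m KK = 0 -> r *m M *m KK = 0) ->
  forall p (S : 'M[C]_(p, n)), S *m KK = 0 -> S *m M *m KK = 0.
Proof.
move=> h p S hS; apply/row_matrixP => i; rewrite row0 !row_mul; apply: h.
by rewrite -row_mul hS row0.
Qed.

Lemma lam_const lam b x0 : x0 \in I -> alternating lam -> normalized lam -> is_biresidue lam b ->
  (0 < n)%N ->
  (forall z, z \notin I -> forall u v, u \in I -> v \in I -> b z u = b z v) ->
  forall x y z, x \in I -> y \in I -> z \notin I -> lam x z = lam y z.
Proof.
move=> x0I Ha Hn Hb n0 Hc x y z xI yI zI.
have [Hba Hbn _] := Hb.
pose S := kermx KK.
have SM : (S *m (b + n%:R^-1 *: JJ) <= S)%MS.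
  rewrite sub_kermx; apply/eqP; apply: stabS; last exact: mulmx_ker.
  exact: (stabM _ x0I).
have SN := inv_stable (MN_one Ha Hn Hb n0) SM.
pose r : 'rV[C]_n := delta_mx 0 x - delta_mx 0 y.
have rS : (r <= S)%MS.
  rewrite sub_kermx; apply/eqP/(rK0 r x0I); split.
    move=> j jI; rewrite !mxE.
    have -> : (j == x) = false by apply/negbTE; apply: contraNneq jI => ->.
    have -> : (j == y) = false by apply/negbTE; apply: contraNneq jI => ->.
    by rewrite andbF subrr.
  rewrite (eq_bigr (fun i => (i == x)%:R - (i == y)%:R)) => [|i _]; last by rewrite !mxE eqxx.
  rewrite sumrB (bigD1 x) //= eqxx big1 => [|i /negbTE -> //].
  rewrite (bigD1 y) //= eqxx big1 => [|i /negbTE -> //].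
  by rewrite subrr.
have := submx_trans (submxMr (lam + n%:R^-1 *: JJ) rS) SN.
rewrite sub_kermx => /eqP /(rK0 _ x0I) [/(_ z zI) + _].
rewrite mulmxBl -!rowE !mxE => /eqP; rewrite subr_eq0 => /eqP.
by move/addIr.
Qed.

End Mat2.
Lemma sum_delta (C : numClosedFieldType) m (F : 'I_m -> C) a :
  \sum_k F k * (k == a)%:R = F a.
Proof.
rewrite (bigD1 a) //= eqxx mulr1 big1 ?addr0 // => k /negbTE ->; exact: mulr0.
Qed.

Lemma self_opp (C : numClosedFieldType) (x : C) : x = - x -> x = 0.
Proof. by move/eqP; rewrite -subr_eq0 opprK -mulr2n mulrn_eq0 /= => /eqP. Qed.

Section Block.
Variable C : numClosedFieldType.
Variable n : nat.
Variables lam b : 'M[C]_n.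
Variable I : {set 'I_n}.
Variable x0 : 'I_n.
Hypothesis x0I : x0 \in I.
Hypothesis Hla : alternating lam.
Hypothesis Hln : normalized lam.
Hypothesis Hb : is_biresidue lam b.
Hypothesis n0 : (0 < n)%N.
Hypothesis Bc : forall z, z \notin I -> forall u v, u \in I -> v \in I -> b z u = b z v.

Let Hba : alternating b. Proof. by case: Hb. Qed.
Let Hbn : normalized b. Proof. by case: Hb. Qed.
Let Lc := lam_const x0I Hla Hln Hb n0 Bc.

Lemma blockI_norm x : x \in I -> \sum_(y in I) lam x y = 0.
Proof.
have sp u : \sum_(y in I) lam u y = - \sum_(y | y \notin I) lam u y.
  have := Hln u; rewrite (bigID (mem I)) /= => h; apply/eqP; rewrite -subr_eq0 opprK h eqxx //.
pose T0 := \sum_(y | y \notin I) lam x0 y.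
have hT u : u \in I -> \sum_(y in I) lam u y = - T0.
  move=> uI; rewrite sp; congr (- _); apply: eq_bigr => y yI; exact: Lc.
have D : \sum_(u in I) \sum_(y in I) lam u y = 0.
  have E : \sum_(u in I) \sum_(y in I) lam u y = \sum_(u in I) \sum_(y in I) lam y u.
    exact: exchange_big.
  apply: self_opp; rewrite {1}E -sumrN; apply: eq_bigr => u _.
  by rewrite -sumrN; apply: eq_bigr => y _; rewrite Hla.
have : (- T0) *+ #|I| = 0.
  by rewrite -D -sumr_const; apply/esym/eq_bigr => u uI; rewrite hT.
have cI : #|I| != 0%N by apply/eqP => /cards0_eq h; move: x0I; rewrite h inE.
move/eqP; rewrite mulrn_eq0 (negbTE cI) /= => /eqP T00.
by move=> xI; rewrite hT // T00.
Qed.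

Lemma colsumI y : y \in I -> \sum_(x in I) lam x y = 0.
Proof.
move=> yI; apply/eqP; rewrite -oppr_eq0 -sumrN.
rewrite (eq_bigr (fun x => lam y x)) ?blockI_norm // => x _; by rewrite Hla opprK.
Qed.

Lemma theta_out x y z : x \in I -> y \in I -> z \notin I -> theta b x y z = 0.
Proof.
move=> xI yI zI; rewrite /theta (Hba z y) (Bc zI xI yI) addrC subrr mul0r //.
Qed.

Lemma bI_eq bI : is_biresidue (submx_on lam I) bI ->
  forall i j, bI i j = b (enum_val i) (enum_val j).
Proof.
move=> [bIa _ bIb] i j.
set x := enum_val i; set y := enum_val j.
have xI : x \in I by apply: enum_valP.
have yI : y \in I by apply: enum_valP.
pose v : 'cV[C]_#|I| := \col_k (b (enum_val k) x - b (enum_val k) y).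
have vD : in_Delta v.
  rewrite /in_Delta (eq_bigr (fun k => b (enum_val k) x - b (enum_val k) y)) => [|k _]; last by rewrite mxE.
  rewrite -(big_enum_val (fun z => b z x - b z y)) /=.
  have h : \sum_z (b z x - b z y) = 0 by rewrite sumrB !colsum // subrr.
  have h2 : \sum_(z | z \notin I) (b z x - b z y) = 0.
    by apply: big1 => z zI; rewrite (Bc zI xI yI) subrr.
  by rewrite (bigID (mem I)) /= h2 addr0 in h.
have Lv : submx_on lam I *m v = \col_k ((k == i)%:R - (k == j)%:R).
  apply/colP => l; rewrite !mxE.
  rewrite (eq_bigr (fun k => lam (enum_val l) (enum_val k) * (b (enum_val k) x - b (enum_val k) y))) => [|k _]; last by rewrite !mxE.
  rewrite -(big_enum_val (fun z => lam (enum_val l) z * (b z x - b z y))) /=.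
  have : \sum_z lam (enum_val l) z * (b z x - b z y) = (enum_val l == x)%:R - (enum_val l == y)%:R.
    rewrite (eq_bigr (fun z => lam (enum_val l) z * b z x - lam (enum_val l) z * b z y)) => [|z _]; last by rewrite mulrBr.
    rewrite sumrB.
    have := lb_P Hla Hln Hb n0 (enum_val l) x; rewrite mxE => ->.
    have := lb_P Hla Hln Hb n0 (enum_val l) y; rewrite mxE => ->.
    by rewrite opprB addrA subrK.
  rewrite (bigID (mem I)) /= [X in _ + X]big1 ?addr0 => [->|z zI]; last by rewrite (Bc zI xI yI) subrr mulr0.
  by rewrite !(inj_eq enum_val_inj).
have := congr1 (fun w : 'cV[C]_#|I| => w i 0) (bIb v vD); rewrite Lv !mxE.
rewrite (eq_bigr (fun k => bI i k * (k == i)%:R - bI i k * (k == j)%:R)) => [|k _]; last by rewrite mxE mulrBr.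
rewrite sumrB !sum_delta !alt_diag // !sub0r => /oppr_inj.
by rewrite /x.
Qed.

Lemma theta_sub (bI : 'M[C]_#|I|) : (forall i j : 'I_#|I|, bI i j = b (enum_val i) (enum_val j)) ->
  forall i j k : 'I_#|I|, theta bI i j k = theta b (enum_val i) (enum_val j) (enum_val k).
Proof. by move=> E i j k; rewrite /theta !E. Qed.

Lemma smooth_sub (bI : 'M[C]_#|I|) : (forall i j : 'I_#|I|, bI i j = b (enum_val i) (enum_val j)) ->
  forall i j : 'I_#|I|, smoothable bI i j <-> smoothable b (enum_val i) (enum_val j).
Proof.
move=> E i j; split.
  move=> [nij nz H]; split.
  - by rewrite (inj_eq enum_val_inj).
  - by rewrite -E.
  - move=> z zi zj; case: (boolP (z \in I)) => zI.
      pose k := enum_rank_in x0I z.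
      have ek : enum_val k = z by rewrite /k enum_rankK_in.
      rewrite -ek -(theta_sub E); apply: H.
        by apply: contra_neq zi => ki; rewrite -ek ki.
      by apply: contra_neq zj => kj; rewrite -ek kj.
    by exists 0%N; rewrite theta_out //; apply: enum_valP.
move=> [nij nz H]; split.
- by rewrite -(inj_eq enum_val_inj).
- by rewrite E.
- move=> k ki kj; rewrite (theta_sub E); apply: H.
    by rewrite (inj_eq enum_val_inj).
  by rewrite (inj_eq enum_val_inj).
Qed.

Lemma rank_block : \rank (submx_on lam I) = #|I|.-1.
Proof.
have m0 : (0 < #|I|)%N by apply/card_gt0P; exists x0.
have up : (\rank (submx_on lam I) <= #|I|.-1)%N.
  have k1 : (const_mx 1 : 'rV[C]_#|I|) *m submx_on lam I = 0.
    apply/rowP => j; rewrite !mxE.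
    rewrite (eq_bigr (fun k => lam (enum_val k) (enum_val j))) => [|k _]; last by rewrite !mxE mul1r.
    rewrite -(big_enum_val (fun z => lam z (enum_val j))) /=.
    by apply: colsumI; apply: enum_valP.
  have := mxrankS (introT sub_kermxP k1); rewrite mxrank_ker rank_rV.
  have -> : (const_mx 1 : 'rV[C]_#|I|) != 0.
    apply/eqP => /rowP /(_ (Ordinal m0)); rewrite !mxE => /eqP; by rewrite oner_eq0.
  move=> h; lia.
pose G := \sum_(k | k \notin I) b k x0 * lam x0 k.
pose g := n%:R^-1 + G.
have BL : submx_on b I *m submx_on lam I = 1%:M - g *: JJ.
  apply/matrixP => i j; rewrite !mxE mulr1.
  rewrite (eq_bigr (fun k => b (enum_val i) (enum_val k) * lam (enum_val k) (enum_val j))) => [|k _]; last by rewrite !mxE.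
  rewrite -(big_enum_val (fun z => b (enum_val i) z * lam z (enum_val j))) /=.
  have := bl_P Hln Hb n0 (enum_val i) (enum_val j); rewrite mxE (bigID (mem I)) /=.
  have -> : \sum_(z | z \notin I) b (enum_val i) z * lam z (enum_val j) = G.
    apply: eq_bigr => z zI; rewrite (Hba z (enum_val i)) (Hla (enum_val j) z).
    rewrite (Bc zI (enum_valP i) x0I) (Lc (enum_valP j) x0I zI).
    by rewrite mulrNN.
  rewrite (inj_eq enum_val_inj) => h.
  by rewrite /g opprD addrA -h addrK.
have lo : (#|I| <= \rank (submx_on lam I) + 1)%N.
  have : (1%:M : 'M[C]_#|I|) = submx_on b I *m submx_on lam I + g *: JJ by rewrite BL subrK.
  move/(congr1 mxrank) => e; rewrite -[X in (X <= _)%N](mxrank1 C #|I|) e.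
  apply: leq_trans (mxrank_add _ _) _; apply: leq_add; first exact: mxrankM_maxr.
  have -> : (g *: JJ : 'M[C]_#|I|) = (g *: const_mx 1 : 'cV[C]_#|I|) *m (const_mx 1 : 'rV[C]_#|I|).
    apply/matrixP => i j; rewrite !mxE big_ord1 !mxE; by rewrite mulr1.
  by apply: leq_trans (mxrankM_maxl _ _) _; apply: rank_leq_col.
lia.
Qed.

Lemma out_pair (i j k : 'I_n) : (3 <= #|I|)%N -> i \notin I -> j \notin I -> smoothable b i j -> k \in I ->
  theta b i j k = 0.
Proof.
move=> I3 iI jI [nij nz H] kI.
have thc z : z \in I -> theta b i j z = theta b i j x0.
  move=> zI; rewrite /theta (Bc jI zI x0I) (Hba i z) (Hba i x0) (Bc iI zI x0I) //.
have xi : x0 != i by apply: contraNneq iI => <-.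
have xj : x0 != j by apply: contraNneq jI => <-.
have [m0 em0] := H x0 xi xj.
rewrite thc // em0; case: m0 em0 => // m0 em0.
exfalso.
have inIij z : z \in I -> (z != i) && (z != j).
  by move=> zI; apply/andP; split; [apply: contraNneq iI => <- | apply: contraNneq jI => <-].
have ge0 z : (z != i) && (z != j) -> 0 <= theta b i j z.
  by case/andP => zi zj; have [mm ->] := H z zi zj; rewrite ler0n.
have S2 : \sum_(z | (z != i) && (z != j)) theta b i j z = 2%:R.
  have h : \sum_z (b z i - b z j) = 0 by rewrite sumrB !colsum // subrr.
  rewrite (bigD1 i) //= (bigD1 j) /= ?(eq_sym j) // in h.
  rewrite (eq_bigr (fun z => theta b i j z * b i j)) in h; last first.
    by move=> z /andP [zi zj]; rewrite theta_mul.
  rewrite -mulr_suml !alt_diag // (Hba i j) in h.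
  move: h; set S := \sum_(z | (z != i) && (z != j)) theta b i j z => h.
  apply: (mulIf nz); apply/eqP; rewrite -subr_eq0 -h; apply/eqP; ring.
have : \sum_(z | (z != i) && (z != j)) theta b i j z >= (m0.+1 * #|I|)%:R.
  rewrite (bigID (mem I)) /=.
  have -> : \sum_(z | ((z != i) && (z != j)) && (z \in I)) theta b i j z = (m0.+1 * #|I|)%:R.
    rewrite (eq_bigl (mem I)) => [|z]; last first.
      by case: (boolP (z \in I)) => zI2; [rewrite andbT (inIij z zI2) | rewrite andbF; apply/esym/negbTE].
    rewrite (eq_bigr (fun _ => m0.+1%:R)) => [|z zI]; last by rewrite thc.
    by rewrite sumr_const natrM mulr_natr.
  rewrite lerDl sumr_ge0 // => z /andP [] /ge0 //.
rewrite S2 ler_nat => h; lia.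
Qed.


End Block.

Lemma modn_2 d x : (x < d + d)%N -> (x %% d = if x < d then x else x - d)%N.
Proof.
move=> h; case: ifP => hx; first exact: modn_small.
have e : x = ((x - d) + d)%N by rewrite subnK // leqNgt hx.
by rewrite {1}e modnDr modn_small //; lia.
Qed.

Section Chord.
Variable C : numClosedFieldType.
Variable n : nat.
Variable b : 'M[C]_n.
Variable m : nat.
Variable c : 'I_m.+1 -> 'I_n.
Hypothesis Ha : alternating b.
Hypothesis Hn : normalized b.
Hypothesis Hc : smoothable_cycle b c.

Lemma val_ordS_inord a : (a < m.+1)%N ->
  nat_of_ord (ordS (inord a : 'I_m.+1)) = if a.+1 == m.+1 then 0%N else a.+1.
Proof. by move=> ha; have := ordS_val (inord a : 'I_m.+1); rewrite inordK. Qed.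

Lemma chord (p q : 'I_m.+1) : (p < q)%N -> smoothable b (c p) (c q) ->
  cycle_edge c (c p) (c q).
Proof.
case: Hc => m3 cinj Hs pq spq.
have qm := ltn_ord q.
have [e|ne] := eqVneq (val q) p.+1.
  exists p; left; split => //; congr c; apply: ord_inj; rewrite ordS_val e.
  by rewrite ifN //; apply/eqP => h; lia.
have [e2|ne2] := boolP ((val p == 0%N) && (val q == m)).
  case/andP: e2 => /eqP p0 /eqP qm'.
  exists q; right; split => //; congr c; apply: ord_inj; rewrite ordS_val qm' eqxx.
  by rewrite p0.
exfalso.
have cI a a' : (a < m.+1)%N -> (a' < m.+1)%N -> c (inord a) = c (inord a') -> a = a'.
  by move=> ha ha' /cinj h; have := congr1 (@nat_of_ord _) h; rewrite !inordK.
pose d1 (s : 'I_(q - p)%N.+1) := c (inord (p + s)%N).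
have hd1 : smoothable_cycle b d1.
  split.
  -  have ne' : (q : nat) <> p.+1 by move=> h; move/eqP: ne; apply. 
    lia.
  - move=> s s' /cI h; apply: ord_inj; have := ltn_ord s; have := ltn_ord s' => h1 h2; move: h => /=.
lia.
  - move=> s; rewrite /d1; have := ordS_val s; have := ltn_ord s => hs.
    case: ifP => /eqP h1 hv.
      have -> : (inord (p + s)%N : 'I_m.+1) = q by apply: ord_inj; rewrite inordK; lia.
      have -> : (inord (p + ordS s)%N : 'I_m.+1) = p by apply: ord_inj; rewrite hv inordK; lia.
      exact: smooth_sym.
    have -> : (inord (p + ordS s)%N : 'I_m.+1) = ordS (inord (p + s)%N).
      apply: ord_inj; rewrite val_ordS_inord ?inordK; try lia.
      by rewrite ifN; [rewrite hv; lia | apply/eqP; lia].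
    exact: Hs.
pose d2 (s : 'I_(m - q + p)%N.+2) := c (inord ((q + s) %% m.+1)%N).
have hd2 : smoothable_cycle b d2.
  split.
  - move: ne2; rewrite negb_and => /orP [] /eqP /= h; lia.
  - move=> s s' /cI h; apply: ord_inj; have := ltn_ord s; have := ltn_ord s' => h1 h2; move: h; rewrite !modn_2; try lia.
    by repeat case: ifP => ?; lia.
  - move=> s; rewrite /d2; have := ordS_val s; have := ltn_ord s => hs.
    case: ifP => /eqP h1 hv.
      have -> : (inord ((q + s) %% m.+1)%N : 'I_m.+1) = p.
        by apply: ord_inj; rewrite modn_2 ?inordK; try lia; case: ifP => ?; lia.
      have -> : (inord ((q + ordS s) %% m.+1)%N : 'I_m.+1) = q.
        by apply: ord_inj; rewrite hv addn0 modn_small ?inordK.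
      exact: spq.
    have -> : (inord ((q + ordS s) %% m.+1)%N : 'I_m.+1) = ordS (inord ((q + s) %% m.+1)%N).
      apply: ord_inj; rewrite val_ordS_inord ?ltn_mod // hv !modn_2 ?inordK; try lia;
      case: (boolP (q + s < m.+1)%N) => h3; case: (boolP (q + s.+1 < m.+1)%N) => h4;
      rewrite ?h3 ?h4 ?(negbTE h3) ?(negbTE h4); try case: eqP => ? ; lia.
    exact: Hs.
(* the two subcycles force b z (c p) = b z (c q) for z outside their intersection *)
have e10 : d1 ord0 = c p by rewrite /d1 addn0 inord_val.
have e1m : d1 ord_max = c q by rewrite /d1 /= subnKC ?inord_val //; lia.
have e20 : d2 ord0 = c q by rewrite /d2 addn0 modn_small // inord_val.
have e2m : d2 ord_max = c p.
  rewrite /d2 /=; congr c; apply: ord_inj; rewrite inordK ?ltn_mod //.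
  rewrite modn_2; try lia; case: ifP => ?; lia.
have inter z : z \in [set d1 t | t : 'I_(q - p)%N.+1] -> z \in [set d2 t | t : 'I_(m - q + p)%N.+2] ->
    (z = c p) \/ (z = c q).
  move=> /imsetP [t1 _ ->] /imsetP [t2 _]; rewrite /d1 /d2 => /cI.
  have := ltn_ord t1; have := ltn_ord t2=> h1 h2.
  rewrite modn_2; try lia.
  case: ifP => h3 h; [right | left]; congr c; apply: ord_inj; rewrite inordK; lia.
have key z : z != c p -> z != c q -> b z (c p) = b z (c q).
  move=> zp zq; case: (boolP (z \in [set d1 t | t : 'I_(q - p)%N.+1])) => z1.
    have z2 : z \notin [set d2 t | t : 'I_(m - q + p)%N.+2].
      by apply/negP => z2; case: (inter z z1 z2) => h; [move/eqP: zp | move/eqP: zq].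
    by rewrite -e20 -e2m (cycle_const Ha hd2 z2 ord0 ord_max) .
  by rewrite -e10 -e1m (cycle_const Ha hd1 z1 ord0 ord_max).
case: spq => npq nz _.
have h : \sum_z (b z (c p) - b z (c q)) = 0 by rewrite sumrB !colsum // subrr.
rewrite (bigD1 (c p)) //= (bigD1 (c q)) /= ?(eq_sym (c q)) // big1 in h; last first.
  by move=> z /andP [zp zq]; rewrite key // subrr.
rewrite !alt_diag // (Ha (c p) (c q)) sub0r subr0 addr0 -opprD in h.
move/eqP: h; rewrite oppr_eq0 -mulr2n mulrn_eq0 /=; by rewrite (negbTE nz).
Qed.

End Chord.

Unset Implicit Arguments.

Theorem lemma5p12 (C : numClosedFieldType) (n : nat) (lam b : 'M[C]_n)
    (m : nat) (c : 'I_m -> 'I_n) :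
  alternating lam -> normalized lam -> \rank lam = n.-1 ->
  is_biresidue lam b ->
  smoothable_cycle b c ->
  let I := [set c t | t : 'I_m] in
  (* (1) *)
  (forall i j k : 'I_n, smoothable b i j -> angle_colored b i j k ->
     (i \in I -> j \in I -> k \in I) /\
     (i \notin I -> j \notin I -> k \notin I)) /\
  (* (2) *)
  (normalized (submx_on lam I) /\ \rank (submx_on lam I) = #|I|.-1 /\
   forall bI : 'M[C]_#|I|, is_biresidue (submx_on lam I) bI ->
     (forall i j : 'I_#|I|,
        smoothable bI i j <-> cycle_edge c (enum_val i) (enum_val j)) /\
     (forall i j k : 'I_#|I|, cycle_edge c (enum_val i) (enum_val j) ->
        [/\ angle_colored bI i j k <->
              angle_colored b (enum_val i) (enum_val j) (enum_val k),
            angle_dark bI i j k <->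
              angle_dark b (enum_val i) (enum_val j) (enum_val k) &
            angle_light bI i j k <->
              angle_light b (enum_val i) (enum_val j) (enum_val k)])) /\
  (* (3) *)
  (forall i1 i2 j : 'I_n, i1 \in I -> i2 \in I -> j \notin I ->
     lam i1 j = lam i2 j).
Proof.
case: m c => [|m] c Hla Hln Hrk Hb Hc; first by case: Hc.
move=> I.
have [m3 cinj Hs] := Hc.
have [Hba Hbn _] := Hb.
have x0I : c ord0 \in I by apply: imset_f.
have n0 : (0 < n)%N by apply: (leq_ltn_trans _ (ltn_ord (c ord0))).
have Bc : forall z, z \notin I -> forall u v, u \in I -> v \in I -> b z u = b z v.
  move=> z zI u v /imsetP [t _ ->] /imsetP [t' _ ->].
  exact: (cycle_const Hba Hc zI).
have cardI : #|I| = m.+1 by rewrite card_imset // card_ord.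
have I3 : (3 <= #|I|)%N by rewrite cardI.
have Lc := lam_const x0I Hla Hln Hb n0 Bc.
split.
  move=> i j k sij [_ ki kj th]; split.
    move=> iI jI; case: (boolP (k \in I)) => // kI.
    by move: th; rewrite (theta_out Hb Bc iI jI kI) eqxx.
  move=> iI jI; apply/negP => kI.
  by move: th; rewrite (out_pair x0I Hb n0 Bc I3 iI jI sij kI) eqxx.
split; last by move=> i1 i2 j h1 h2 hj; exact: Lc.
split.
  move=> i; rewrite (eq_bigr (fun j => lam (enum_val i) (enum_val j))) => [|j _]; last by rewrite mxE.
  rewrite -(big_enum_val (fun y => lam (enum_val i) y)) /=.
  by apply: (blockI_norm x0I Hla Hln Hb n0 Bc); apply: enum_valP.
split; first exact: (rank_block x0I Hla Hln Hb n0 Bc).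
move=> bI hbI.
have E := bI_eq Hla Hln Hb n0 Bc hbI.
have SS := smooth_sub x0I Hb Bc E.
have TS := theta_sub E.
split.
  move=> i j; rewrite SS; split; last first.
    case=> t [[-> ->]|[-> ->]]; first exact: Hs.
    exact: smooth_sym.
  have /imsetP [p _ ep] := enum_valP i.
  have /imsetP [q _ eqq] := enum_valP j.
  rewrite ep eqq => spq.
  have [pq|qp|pq] := ltngtP p q.
  - exact: (chord Hba Hbn Hc pq spq).
  - have := chord Hba Hbn Hc qp (smooth_sym Hba spq).
    by case=> t [[e1 e2]|[e1 e2]]; exists t; [right|left].
  - by case: spq; rewrite (ord_inj pq) eqxx.
move=> i j k _.
rewrite /angle_colored /angle_dark /angle_light TS !(inj_eq enum_val_inj).
have S := SS i j.
split; (split; case=> h1 h2 h3 h4; split => //; by apply/S).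
Qed.
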